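(* Let $\Gamma$ be an $n$-dimensional crystallographic group with holonomy group $F\subseteq\mathrm{GL}_n(\mathbb{Z})$. If the normaliser $N_{\mathrm{GL}_n(\mathbb{Z})}(F)$ is finite, then the Reidemeister spectrum $\mathrm{Spec}_R(\Gamma)$ is finite.
   Context: An $n$-dimensional crystallographic group is a discrete cocompact subgroup of $\mathbb{R}^n\rtimes O(n)$; it is realised inside $\mathrm{Aff}(\mathbb{R}^n)=\mathbb{R}^n\rtimes\mathrm{GL}_n(\mathbb{R})$ such that its subgroup of pure translations is exactly $\{(z,I_n)\mid z\in\mathbb{Z}^n\}$. The holonomy group is $F=\{A\mid\exists a:\ (a,A)\in\Gamma\}\subseteq\mathrm{GL}_n(\mathbb{Z})$. For an automorphism $\varphi$ of a group $G$, $R(\varphi)\in\{1,2,\dots\}\cup\{\infty\}$ is the number of classes of the relation $g\sim g'\iff\exists h\in G: g=hg'\varphi(h)^{-1}$, and $\mathrm{Spec}_R(G)=\{R(\varphi)\mid\varphi\in\mathrm{Aut}(G)\}$. *)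

(* Defs.v *)
From HB Require Import structures.
From mathcomp Require Import all_boot all_order all_algebra.
From mathcomp Require Import boolp classical_sets cardinality reals.
Set Implicit Arguments. Unset Strict Implicit. Unset Printing Implicit Defensive.
Import Order.TTheory GRing.Theory Num.Theory.
Local Open Scope ring_scope.
Local Open Scope classical_set_scope.

Section Affine.
Variables (R : realType) (n : nat).

(* An element (a, A) of Aff(R^n) = R^n x| GL_n(R) : x |-> A x + a. *)
Definition aff := ('cV[R]_n * 'M[R]_n)%type.

Definition aff_one : aff := (0, 1%:M).
Definition aff_mul (g h : aff) : aff := (g.1 + g.2 *m h.1, g.2 *m h.2).
Definition aff_inv (g : aff) : aff := (- (invmx g.2 *m g.1), invmx g.2).

Definition is_aff : set aff := [set g | g.2 \in unitmx].

Definition aff_subgroup (G : set aff) : Prop :=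
  [/\ G `<=` is_aff, G aff_one,
      (forall g h, G g -> G h -> G (aff_mul g h)) &
      (forall g, G g -> G (aff_inv g))].

Definition is_isometry : set aff := [set g | g.2 *m g.2^T = 1%:M].

(* sup-distance (on coordinates) less than e: the standard topology *)
Definition aff_close (e : R) (g h : aff) : Prop :=
  (forall i, `|g.1 i 0 - h.1 i 0| < e) /\
  (forall i j, `|g.2 i j - h.2 i j| < e).

Definition aff_discrete (G : set aff) : Prop :=
  forall g, G g -> exists2 e : R, 0 < e & forall h, G h -> aff_close e g h -> h = g.

(* G is cocompact in E(n): there is a compact K = {(x,X) in E(n) | |x|_oo <= r}
   with G K = E(n). *)
Definition cocompact_in_E (G : set aff) : Prop :=
  exists r : R, forall y, is_isometry y ->
    exists2 g, G g & forall i, `|(aff_mul g y).1 i 0| <= r.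

Definition euclidean_crystallographic (G : set aff) : Prop :=
  [/\ aff_subgroup G, G `<=` is_isometry, aff_discrete G & cocompact_in_E G].

Definition aff_conj (h : aff) (G : set aff) : set aff :=
  [set aff_mul (aff_mul h g) (aff_inv h) | g in G].

(* An n-dimensional crystallographic group, realised inside Aff(R^n) (i.e. an
   affine conjugate of a discrete cocompact subgroup of E(n)) so that its pure
   translations are exactly Z^n. *)
Definition crystallographic_Zn (G : set aff) : Prop :=
  [/\ aff_subgroup G,
      (exists2 h, is_aff h & euclidean_crystallographic (aff_conj (aff_inv h) G)) &
      (forall z : 'cV[R]_n, G (z, 1%:M) <-> forall i, z i 0 \is a Num.int)].

Definition holonomy (G : set aff) : set 'M[R]_n :=
  [set A | exists a, G (a, A)].

Definition intmx (A : 'M[int]_n) : 'M[R]_n := map_mx (fun z : int => z%:~R) A.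

Definition GLZ_normaliser (F : set 'M[R]_n) : set 'M[int]_n :=
  [set A | A \in unitmx /\
           [set intmx A *m B *m invmx (intmx A) | B in F] = F].

Definition is_aut (G : set aff) (phi : aff -> aff) : Prop :=
  [/\ (forall g, G g -> G (phi g)),
      (forall g h, G g -> G h -> phi (aff_mul g h) = aff_mul (phi g) (phi h)),
      (forall g h, G g -> G h -> phi g = phi h -> g = h) &
      (forall h, G h -> exists2 g, G g & phi g = h)].

Definition twisted_conj (G : set aff) (phi : aff -> aff) (g g' : aff) : Prop :=
  exists2 h, G h & g = aff_mul (aff_mul h g') (aff_inv (phi h)).

Definition has_k_classes (G : set aff) (phi : aff -> aff) (k : nat) : Prop :=
  exists s : seq aff,
    [/\ size s = k,
        (forall i, (i < k)%N -> G (nth aff_one s i)),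
        (forall i j, (i < k)%N -> (j < k)%N ->
           twisted_conj G phi (nth aff_one s i) (nth aff_one s j) -> i = j) &
        (forall g, G g -> exists2 i, (i < k)%N & twisted_conj G phi g (nth aff_one s i))].

(* R(phi) = r, with None standing for infinity *)
Definition reidemeister (G : set aff) (phi : aff -> aff) (r : option nat) : Prop :=
  match r with
  | Some k => has_k_classes G phi k
  | None => forall k, ~ has_k_classes G phi k
  end.

Definition reidemeister_spectrum (G : set aff) : set (option nat) :=
  [set r | exists phi, is_aut G phi /\ reidemeister G phi r].

End Affine.

(* Main.v *)
Require Import Defs.
From HB Require Import structures.
From mathcomp Require Import all_boot all_order all_algebra.
From mathcomp Require Import boolp classical_sets cardinality reals.
Set Implicit Arguments. Unset Strict Implicit. Unset Printing Implicit Defensive.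
Import Order.TTheory GRing.Theory Num.Theory.
Local Open Scope ring_scope.
Local Open Scope classical_set_scope.

Section AffAlg.
Variables (R : realType) (n : nat).
Local Notation aff := (aff R n).
Local Notation "1'" := (aff_one R n).
Local Notation V := 'cV[R]_n.
Implicit Types g h x k : aff.
Definition tr (z : V) : aff := (z, 1%:M).

Lemma affP (g h : aff) : g.1 = h.1 -> g.2 = h.2 -> g = h.
Proof. by case: g h => [? ?] [? ?] /= -> ->. Qed.

Lemma mulA (g h k : aff) : aff_mul (aff_mul g h) k = aff_mul g (aff_mul h k).
Proof. by apply: affP; rewrite /= ?mulmxDr ?mulmxA ?addrA. Qed.

Lemma mul1g g : aff_mul 1' g = g.
Proof. by apply: affP; rewrite /= ?mul1mx ?add0r. Qed.

Lemma mulg1 g : aff_mul g 1' = g.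
Proof. by apply: affP; rewrite /= ?mulmx1 ?mulmx0 ?addr0. Qed.

Lemma mulVg g : is_aff g -> aff_mul (aff_inv g) g = 1'.
Proof.
rewrite /is_aff /= => u; apply: affP; rewrite /= ?mulVmx //.
idtac.
by rewrite addNr.
Qed.

Lemma mulgV g : is_aff g -> aff_mul g (aff_inv g) = 1'.
Proof.
rewrite /is_aff /= => u; apply: affP; rewrite /= ?mulmxV //.
by rewrite mulmxN mulmxA mulmxV // mul1mx subrr.
Qed.

Lemma is_affM g h : is_aff g -> is_aff h -> is_aff (aff_mul g h).
Proof. by rewrite /is_aff /= => ??; rewrite unitmx_mul; apply/andP. Qed.

Lemma is_affV g : is_aff g -> is_aff (aff_inv g).
Proof. by rewrite /is_aff /= unitmx_inv. Qed.

Lemma mulKg g h : is_aff g -> aff_mul (aff_inv g) (aff_mul g h) = h.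
Proof. by move=> u; rewrite -mulA mulVg // mul1g. Qed.

Lemma mulVKg g h : is_aff g -> aff_mul g (aff_mul (aff_inv g) h) = h.
Proof. by move=> u; rewrite -mulA mulgV // mul1g. Qed.

Lemma mulgK g h : is_aff g -> aff_mul (aff_mul h g) (aff_inv g) = h.
Proof. by move=> u; rewrite mulA mulgV // mulg1. Qed.

Lemma mulgVK g h : is_aff g -> aff_mul (aff_mul h (aff_inv g)) g = h.
Proof. by move=> u; rewrite mulA mulVg // mulg1. Qed.

Lemma inv_uniq g x : is_aff g -> aff_mul x g = 1' -> x = aff_inv g.
Proof. by move=> u e; rewrite -(mulgK x u) e mul1g. Qed.

Lemma invM g h : is_aff g -> is_aff h ->
  aff_inv (aff_mul g h) = aff_mul (aff_inv h) (aff_inv g).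
Proof.
move=> ug uh; apply/esym/inv_uniq; first exact: is_affM.
by rewrite mulA -(mulA (aff_inv g)) mulVg // mul1g mulVg.
Qed.

Lemma invK g : is_aff g -> aff_inv (aff_inv g) = g.
Proof. by move=> u; apply/esym/inv_uniq; [exact: is_affV| exact: mulgV]. Qed.

Lemma tr_mul z w : aff_mul (tr z) (tr w) = tr (z + w).
Proof. by apply: affP; rewrite /= ?mul1mx ?mulmx1. Qed.

Lemma tr_inv z : aff_inv (tr z) = tr (- z).
Proof. by apply: affP; rewrite /= ?invmx1 ?mul1mx. Qed.

Lemma tr_mull w (c : V) A : aff_mul (tr w) (c, A) = (w + c, A).
Proof. by apply: affP; rewrite /= ?mul1mx. Qed.

Lemma tr_mulr w (c : V) A : aff_mul (c, A) (tr w) = (c + A *m w, A).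
Proof. by apply: affP; rewrite /= ?mulmx1. Qed.

Lemma tr_conj (a : V) A z : A \in unitmx ->
  aff_mul (aff_mul (a, A) (tr z)) (aff_inv (a, A)) = tr (A *m z).
Proof.
move=> u; apply: affP; rewrite /= ?mulmx1 ?mulmxV //.
by rewrite mulmxN mulmxA mulmxV // mul1mx addrAC subrr add0r.
Qed.

Lemma is_aff_tr z : is_aff (tr z).
Proof. by rewrite /is_aff /= unitmx1. Qed.

Lemma mul_inv_same (c c' : V) A : A \in unitmx ->
  aff_mul (c, A) (aff_inv (c', A)) = tr (c - c').
Proof.
by move=> u; apply: affP; rewrite /= ?mulmxV // mulmxN mulmxA mulmxV // mul1mx.
Qed.

End AffAlg.

Section IntMx.
Variables (R : realType).
Definition imx {p q} (M : 'M[int]_(p,q)) : 'M[R]_(p,q) := map_mx (fun z : int => z%:~R) M.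
Definition toint {p q} (M : 'M[R]_(p,q)) : 'M[int]_(p,q) := map_mx (@Num.floor R) M.
Definition isZm {p q} (M : 'M[R]_(p,q)) := forall i j, M i j \is a Num.int.

Lemma intmxE n (A : 'M[int]_n) : intmx R A = imx A. Proof. by []. Qed.

Lemma imx_inj p q : injective (@imx p q).
Proof.
move=> A B e; apply/matrixP => i j.
by move/matrixP: e => /(_ i j); rewrite !mxE => /intr_inj.
Qed.

Lemma imxM p q r (A : 'M[int]_(p,q)) (B : 'M[int]_(q,r)) : imx (A *m B) = imx A *m imx B.
Proof. exact: map_mxM. Qed.
Lemma imxD p q (A B : 'M[int]_(p,q)) : imx (A + B) = imx A + imx B.
Proof. exact: map_mxD. Qed.
Lemma imxN p q (A : 'M[int]_(p,q)) : imx (- A) = - imx A.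
Proof. exact: map_mxN. Qed.
Lemma imxB p q (A B : 'M[int]_(p,q)) : imx (A - B) = imx A - imx B.
Proof. exact: map_mxB. Qed.
Lemma imx1 p : imx (1%:M : 'M[int]_p) = 1%:M.
Proof. exact: map_mx1. Qed.
Lemma imx0 p q : imx (0 : 'M[int]_(p,q)) = 0.
Proof. exact: map_mx0. Qed.
Lemma imx_delta p q i j : imx (delta_mx i j : 'M[int]_(p,q)) = delta_mx i j.
Proof. by apply/matrixP=> a b; rewrite !mxE; case: (_ && _). Qed.
Lemma det_imx p (A : 'M[int]_p) : \det (imx A) = (\det A)%:~R.
Proof. exact: det_map_mx. Qed.
Lemma imx_adj p (A : 'M[int]_p) : imx (\adj A) = \adj (imx A).
Proof. exact: map_mx_adj. Qed.

Lemma isZm_imx p q (M : 'M[R]_(p,q)) : isZm M -> M = imx (toint M).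
Proof. by move=> h; apply/matrixP=> i j; rewrite !mxE floorK //; exact: h. Qed.

Lemma imx_isZm p q (M : 'M[int]_(p,q)) : isZm (imx M).
Proof. by move=> i j; rewrite mxE intr_int. Qed.

Lemma isZmP p q (M : 'M[R]_(p,q)) : isZm M <-> exists M', M = imx M'.
Proof.
split; first by move=> h; exists (toint M); exact: isZm_imx.
by case=> M' ->; exact: imx_isZm.
Qed.

Lemma toint_imx p q (M : 'M[int]_(p,q)) : toint (imx M) = M.
Proof. by apply: imx_inj; rewrite -isZm_imx //; exact: imx_isZm. Qed.

End IntMx.
Arguments imx {R p q} M.
Arguments imx_isZm {R p q} M.

Section Generic.
Variables (R : realType) (n : nat).
Local Notation V := 'cV[R]_n.

Lemma mx_eq_cols m (M M' : 'M[R]_(m,n)) :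
  (forall j, M *m (delta_mx j 0 : 'cV_n) = M' *m delta_mx j 0) -> M = M'.
Proof.
move=> h; apply/matrixP => i j; move: (h j); rewrite -!colE => /matrixP /(_ i 0).
by rewrite !mxE.
Qed.

Lemma cV_decomp (z : 'cV[int]_n) : z = \sum_i (delta_mx i 0) *~ z i 0.
Proof.
apply/matrixP => a b; rewrite summxE (bigD1 a) //= big1 ?addr0.
  by rewrite (ord1 b) -scaler_int !mxE !eqxx /= intz mulr1.
by move=> i /negbTE ne; rewrite -scaler_int !mxE eq_sym ne /= mulr0.
Qed.

Lemma add_sum (u : 'cV[int]_n -> V) : (forall a b, u (a + b) = u a + u b) ->
  forall z, u z = \sum_i u (delta_mx i 0) *~ z i 0.
Proof.
move=> hu.
have u0 : u 0 = 0 by apply/eqP; rewrite -(addrI (u 0) (_ : u 0 + u 0 = u 0 + 0)) // addr0 -hu addr0.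
have uN a : u (- a) = - u a by apply/eqP; rewrite -subr_eq0 opprK -hu addNr u0.
have uMn a (m : nat) : u (a *+ m) = u a *+ m.
  by elim: m => [|m ih]; rewrite ?mulr0n ?u0 // !mulrS hu ih.
have uMz a k : u (a *~ k) = u a *~ k.
  case: k => m; first by rewrite -!pmulrn uMn.
  by rewrite !NegzE !mulrNz -!pmulrn uN uMn.
move=> z; rewrite {1}(cV_decomp z).
rewrite (big_morph u hu u0); apply: eq_bigr => i _; exact: uMz.
Qed.

Lemma add_ext (u1 u2 : 'cV[int]_n -> V) :
  (forall a b, u1 (a + b) = u1 a + u1 b) -> (forall a b, u2 (a + b) = u2 a + u2 b) ->
  (forall i, u1 (delta_mx i 0) = u2 (delta_mx i 0)) -> forall z, u1 z = u2 z.
Proof.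
move=> h1 h2 e z; rewrite (add_sum h1) (add_sum h2); apply: eq_bigr => i _.
by rewrite e.
Qed.

End Generic.

Lemma zfact (M : zmodType) (a b c d w : M) : a + (c + b - d) = w + a - c + b -> w - c - (c - d) = 0.
Proof.
by rewrite [c + b - d]addrAC addrCA [w + a - c]addrAC -[RHS]addrA => /addIr ->; rewrite subrr.
Qed.

Section Main.
Variables (R : realType) (n : nat) (G : set (aff R n)).
Hypothesis HG : aff_subgroup G.
Hypothesis Htr : forall z : 'cV[R]_n, G (z, 1%:M) <-> forall i, z i 0 \is a Num.int.
Local Notation aff := (aff R n).
Local Notation "1'" := (aff_one R n).
Local Notation V := 'cV[R]_n.
Local Notation F := (holonomy G).
Implicit Types g h x : aff.

Lemma Gaff g : G g -> is_aff g. Proof. by case: HG => + _ _ _; apply. Qed.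
Lemma G1 : G 1'. Proof. by case: HG. Qed.
Lemma GM g h : G g -> G h -> G (aff_mul g h). Proof. by case: HG => _ _ + _; apply. Qed.
Lemma GV g : G g -> G (aff_inv g). Proof. by case: HG => _ _ _; apply. Qed.
Lemma GU (a : V) A : G (a, A) -> A \in unitmx. Proof. by move/Gaff. Qed.

Lemma trG (z : V) : G (tr z) <-> isZm z.
Proof.
rewrite /tr Htr; split=> h i; last exact: h.
by move=> j; rewrite (ord1 j); exact: h.
Qed.

Lemma isZmM p q r (A : 'M[R]_(p,q)) (B : 'M[R]_(q,r)) : isZm A -> isZm B -> isZm (A *m B).
Proof. by move=> /isZmP[A' ->] /isZmP[B' ->]; rewrite -imxM; exact: imx_isZm. Qed.
Lemma isZmD p q (A B : 'M[R]_(p,q)) : isZm A -> isZm B -> isZm (A + B).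
Proof. by move=> /isZmP[A' ->] /isZmP[B' ->]; rewrite -imxD; exact: imx_isZm. Qed.
Lemma isZmN p q (A : 'M[R]_(p,q)) : isZm A -> isZm (- A).
Proof. by move=> /isZmP[A' ->]; rewrite -imxN; exact: imx_isZm. Qed.
Lemma isZm_delta p q i j : isZm (delta_mx i j : 'M[R]_(p,q)).
Proof. by rewrite -imx_delta; exact: imx_isZm. Qed.
Lemma isZm1 p : isZm (1%:M : 'M[R]_p).
Proof. by rewrite -imx1; exact: imx_isZm. Qed.

Lemma conjZ (a : V) A (z : V) : G (a, A) -> isZm z -> isZm (A *m z).
Proof.
move=> Ga Zz; apply/trG; rewrite -(tr_conj a); last exact: GU Ga.
by apply: GM; [apply: GM => //; exact/trG | exact: GV].
Qed.

Lemma holo_int (a : V) A : G (a, A) -> isZm A.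
Proof.
move=> Ga i j; move: (conjZ (z := delta_mx j 0) Ga (isZm_delta _ _)).
by rewrite -colE => /(_ i 0); rewrite mxE.
Qed.

Lemma F1 : F 1%:M. Proof. by exists 0; exact: G1. Qed.
Lemma FM A B : F A -> F B -> F (A *m B).
Proof. by move=> [a Ga] [b Gb]; exists (a + A *m b); exact: (GM Ga Gb). Qed.
Lemma FV A : F A -> F (invmx A).
Proof. by move=> [a Ga]; exists (- (invmx A *m a)); exact: (GV Ga). Qed.
Lemma FU A : F A -> A \in unitmx. Proof. by move=> [a Ga]; exact: GU Ga. Qed.
Lemma FZ A : F A -> isZm A. Proof. by move=> [a Ga]; exact: holo_int Ga. Qed.

Lemma F_sub_N A : F A -> GLZ_normaliser F (toint A).
Proof.
move=> FA; have eA : imx (toint A) = A by rewrite -isZm_imx //; exact: FZ.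
split.
  have FA' := FV FA.
  have e : toint A *m toint (invmx A) = 1%:M.
    apply: (@imx_inj R); rewrite imxM imx1 -!isZm_imx ?mulmxV //; [exact: FU | exact: FZ | exact: FZ].
  by case: (mulmx1_unit e).
rewrite intmxE eA; apply/seteqP; split=> B.
  by case=> C FC <-; apply: FM; [exact: FM | exact: FV].
move=> FB; exists (invmx A *m B *m A); first by apply: FM => //; apply: FM => //; exact: FV.
by rewrite !mulmxA mulmxV ?mul1mx ?mulmxK //; exact: FU.
Qed.

Hypothesis HN : finite_set (GLZ_normaliser F).

Lemma F_finite : finite_set F.
Proof.
apply: (sub_finite_set (B := imx @` GLZ_normaliser F)); last exact: finite_image.
move=> A FA; exists (toint A); first exact: F_sub_N.
by rewrite -isZm_imx //; exact: FZ.
Qed.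

Definition Fs : seq 'M[R]_n := projT1 (cid (iffLR (finite_seqP F) F_finite)).
Lemma FsE : F = [set` Fs].
Proof. by rewrite /Fs; case: cid. Qed.
Lemma inFs A : F A -> A \in Fs.
Proof. by rewrite FsE. Qed.

Lemma F_pow A k : F A -> F (A ^+ k).
Proof.
move=> FA; elim: k => [|k ih]; first exact: F1.
by rewrite exprSr -mulmxE; exact: FM.
Qed.

Lemma unipotent A : F A -> (1%:M - A) *m (1%:M - A) = 0 -> A = 1%:M.
Proof.
move=> FA h; have [N eN] : exists N, N = A - 1%:M by eexists.
have NN : N * N = 0 by rewrite eN -mulmxE -opprB mulNmx mulmxN opprK h.
have eA : A = 1 + N by rewrite eN addrC subrK.
have pw k : A ^+ k = 1 + N *+ k.
  elim: k => [|k ih]; first by rewrite expr0 mulr0n addr0.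
  rewrite exprSr ih eA mulrDl mul1r mulrDr mulr1 mulrnAl NN mul0rn addr0.
  by rewrite mulrS addrA.
case: (eqVneq A 1%:M) => // neA; exfalso.
have N0 : N != 0 by rewrite eN subr_eq0.
have [i [j Nij]] : exists i j, N i j != 0.
  apply: contrapT => hn; move/eqP: N0; apply; apply/matrixP => i j; rewrite mxE.
  by apply/eqP/negPn/negP => hij; apply: hn; exists i, j.
pose s := [seq A ^+ k | k <- iota 0 (size Fs).+1].
have : (size s <= size Fs)%N.
  apply: uniq_leq_size.
    rewrite map_inj_uniq ?iota_uniq // => k k' e.
    move: e; rewrite !pw => /addrI /matrixP /(_ i j).
    by rewrite !mulmxnE => /mulrIn; apply.
  by move=> B /mapP [k _ ->]; apply: inFs; exact: F_pow.
by rewrite size_map size_iota ltnn.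
Qed.


Section Phi.
Variable phi : aff -> aff.
Hypothesis Hphi : is_aut G phi.

Lemma phiG g : G g -> G (phi g). Proof. by case: Hphi => + _ _ _; apply. Qed.
Lemma phiM g h : G g -> G h -> phi (aff_mul g h) = aff_mul (phi g) (phi h).
Proof. by case: Hphi => _ + _ _; apply. Qed.
Lemma phi_inj g h : G g -> G h -> phi g = phi h -> g = h.
Proof. by case: Hphi => _ _ + _; apply. Qed.
Lemma phi_surj h : G h -> exists2 g, G g & phi g = h.
Proof. by case: Hphi => _ _ _; apply. Qed.

Lemma phi1 : phi 1' = 1'.
Proof.
have e := phiM G1 G1; rewrite mul1g in e.
have u : is_aff (phi 1') by apply: Gaff; apply: phiG; exact: G1.
by rewrite -(mulKg (phi 1') u) -e mulVg.
Qed.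

Lemma phiV g : G g -> phi (aff_inv g) = aff_inv (phi g).
Proof.
move=> Gg; apply: inv_uniq; first by apply: Gaff; exact: phiG.
by rewrite -phiM ?mulVg ?phi1 //; [exact: Gaff | exact: GV].
Qed.

Lemma phiT (z : V) : isZm z -> exists a, isZm a /\ phi (tr z) = tr a.
Proof.
move=> Zz; have Gt : G (tr z) by exact/trG.
case e : (phi (tr z)) => [a A].
have GaA : G (a, A) by rewrite -e; exact: phiG.
suff A1 : A = 1%:M.
  by exists a; split; [apply/trG; rewrite /tr -A1 | rewrite /tr -A1].
apply: unipotent; first by exists a.
apply: mx_eq_cols => j; rewrite mul0mx.
set w : V := delta_mx j 0.
have Gw : G (tr w) by apply/trG; exact: isZm_delta.
have [s Gs es] := phi_surj Gw.
case: s Gs es => [b B] Gs es.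
have UB : B \in unitmx by exact: GU Gs.
have Gu : G (tr (B *m z)) by apply/trG; exact: (conjZ Gs Zz).
have comm : aff_mul (tr z) (tr (B *m z)) = aff_mul (tr (B *m z)) (tr z) by rewrite !tr_mul addrC.
have := congr1 phi comm; rewrite !phiM // e.
have Gs' := GV Gs; have Gst := GM Gs Gt.
rewrite -(tr_conj b z UB) !phiM //.
rewrite phiV // es e tr_inv tr_mull tr_mulr.
move/(congr1 fst) => /= E.
rewrite -mulmxA !mulmxBl !mul1mx mulmxBr; apply: (zfact (a := a) (b := A *m a)).
by move: E; rewrite mulmxN !mulmxDr mulmxN.
Qed.


Definition f (z : V) : V := (phi (tr z)).1.

Lemma phi_trf (z : V) : isZm z -> phi (tr z) = tr (f z) /\ isZm (f z).
Proof. by move=> /phiT [a [Za e]]; rewrite /f e. Qed.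

Definition D : 'M[R]_n := \matrix_(i, j) (f (delta_mx j 0)) i 0.

Lemma phi_tr_int (zi : 'cV[int]_n) : phi (tr (imx zi)) = tr (D *m imx zi).
Proof.
have [-> _] := phi_trf (imx_isZm zi); congr tr.
pose u1 := fun zi : 'cV[int]_n => f (imx zi).
pose u2 := fun zi : 'cV[int]_n => D *m imx zi.
apply: (@add_ext R n u1 u2).
- move=> x y; rewrite /u1 imxD.
  have [e1 _] := phi_trf (imx_isZm x); have [e2 _] := phi_trf (imx_isZm y).
  rewrite /f -tr_mul phiM; try by apply/trG; exact: imx_isZm.
  by rewrite -/(f _) -/(f _) e1 e2 tr_mul.
- by move=> x y; rewrite /u2 imxD mulmxDr.
- move=> i; rewrite /u1 /u2 imx_delta -colE; apply/matrixP => k l.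
  by rewrite (ord1 l) !mxE.
Qed.

Lemma D_Z : isZm D.
Proof.
move=> i j; rewrite mxE; have [_ Z] := phi_trf (isZm_delta (p := n) (q := 1) j 0).
exact: Z.
Qed.

Lemma phi_trZ (z : V) : isZm z -> phi (tr z) = tr (D *m z).
Proof. by move=> /isZmP [zi ->]; exact: phi_tr_int. Qed.

Lemma D_preim (e : V) : isZm e -> exists2 u : V, isZm u & D *m u = e.
Proof.
move=> Ze; have Ge : G (tr e) by exact/trG.
have [[a B] Gg eg] := phi_surj Ge.
have B1 : B = 1%:M.
  apply: mx_eq_cols => j; rewrite mul1mx.
  set z : V := delta_mx j 0.
  have Zz : isZm z by exact: isZm_delta.
  have Gz : G (tr z) by exact/trG.
  have : aff_mul (tr z) (a, B) = aff_mul (a, B) (tr z).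
    apply: phi_inj; try by apply: GM.
    by rewrite !phiM // eg phi_trZ // !tr_mul addrC.
  by rewrite tr_mull tr_mulr => /(congr1 fst) /=; rewrite addrC => /addrI ez; rewrite -ez.
move: Gg eg; rewrite B1 -/(tr a) => Ga; rewrite phi_trZ; last exact/trG.
by move=> [<-]; exists a => //; exact/trG.
Qed.

Definition Dint := toint D.
Lemma DintE : imx Dint = D. Proof. by rewrite -isZm_imx //; exact: D_Z. Qed.

Lemma D_unit : Dint \in unitmx /\ D \in unitmx.
Proof.
have : forall j : 'I_n, exists u : V, isZm u /\ D *m u = delta_mx j 0.
  by move=> j; have [u ? ?] := D_preim (isZm_delta (p := n) (q := 1) j 0); exists u.
move=> /choice [u Hu].
pose E : 'M[R]_n := \matrix_(i, j) (u j) i 0.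
have EZ : isZm E by move=> i j; rewrite mxE; case: (Hu j) => + _; apply.
have DE : D *m E = 1%:M.
  apply: mx_eq_cols => j; rewrite -mulmxA -colE mul1mx.
  have -> : col j E = u j by apply/matrixP => i k; rewrite (ord1 k) !mxE.
  by case: (Hu j).
have DEi : Dint *m toint E = 1%:M.
  by apply: (@imx_inj R); rewrite imxM imx1 DintE -isZm_imx.
by split; [case: (mulmx1_unit DEi) | case: (mulmx1_unit DE)].
Qed.

Lemma D_conj (a : V) A : G (a, A) -> (phi (a, A)).2 = D *m A *m invmx D.
Proof.
move=> Ga; have Gp := phiG Ga.
case e : (phi (a, A)) => [b B]; rewrite e in Gp => /=.
have UA := GU Ga; have UB := GU Gp.
have DA : D *m A = B *m D.
  apply: mx_eq_cols => j; rewrite -!mulmxA.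
  set z : V := delta_mx j 0.
  have Zz : isZm z by exact: isZm_delta.
  have Gz : G (tr z) by exact/trG.
  have GaV := GV Ga; have Gaz := GM Ga Gz.
  have := phi_trZ (conjZ Ga Zz); rewrite -(tr_conj a z UA) !phiM //.
  rewrite phiV // e phi_trZ // tr_conj // => /(congr1 fst) /=.
  by move=> ->.
by rewrite DA mulmxK //; case: D_unit.
Qed.

Lemma D_norm : GLZ_normaliser F Dint.
Proof.
split; first by case: D_unit.
rewrite intmxE DintE; apply/seteqP; split=> B.
  case=> A [a Ga] <-; rewrite -(D_conj Ga).
  by exists (phi (a, A)).1; rewrite -surjective_pairing; exact: phiG.
case=> b Gb; have [[a A] Ga e] := phi_surj Gb.
by exists A; [exists a | rewrite -(D_conj Ga) e].
Qed.

Local Notation tc := (twisted_conj G phi).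

Lemma tc_refl g : G g -> tc g g.
Proof. by move=> Gg; exists 1' => //; [exact: G1 | rewrite phi1 mul1g /aff_inv /= invmx1 mul1mx oppr0 -/(aff_one R n) mulg1]. Qed.

Lemma tc_sym g g' : G g' -> tc g g' -> tc g' g.
Proof.
move=> Gg' [h Gh ->]; exists (aff_inv h); first exact: GV.
have uh := Gaff Gh; have uph : is_aff (phi h) by apply: Gaff; exact: phiG.
rewrite phiV // invK // mulA.
by rewrite mulgVK // mulKg.
Qed.

Lemma tc_trans g g' g'' : tc g g' -> tc g' g'' -> tc g g''.
Proof.
move=> [h Gh ->] [k Gk ->]; exists (aff_mul h k); first exact: GM.
have uph : is_aff (phi h) by apply: Gaff; exact: phiG.
have upk : is_aff (phi k) by apply: Gaff; exact: phiG.
by rewrite phiM // invM // !mulA.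
Qed.

Lemma tr_twist (c : V) A (w : V) : isZm w ->
  aff_mul (aff_mul (tr w) (c, A)) (aff_inv (phi (tr w))) = (c + (1%:M - A *m D) *m w, A).
Proof.
move=> Zw; rewrite phi_trZ // tr_inv tr_mull tr_mulr; congr (_, _).
by rewrite mulmxBl mul1mx mulmxN mulmxA addrCA addrA.
Qed.

Lemma tc_tr (c : V) A (w : V) : isZm w ->
  tc (c + (1%:M - A *m D) *m w, A) (c, A).
Proof.
by move=> Zw; exists (tr w); [exact/trG | rewrite tr_twist].
Qed.


Lemma cA_ex : forall A : 'M[R]_n, exists c : V, F A -> G (c, A).
Proof.
move=> A; have [[c Gc]|nF] := pselect (F A); first by exists c.
by exists 0 => /nF.
Qed.
Definition cA : 'M[R]_n -> V := projT1 (choice cA_ex).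
Lemma cA_G A : F A -> G (cA A, A).
Proof. by rewrite /cA; case: (choice cA_ex) => g; apply. Qed.

Definition Ns : seq 'M[int]_n := projT1 (cid (iffLR (finite_seqP _) HN)).
Lemma NsE : GLZ_normaliser F = [set` Ns].
Proof. by rewrite /Ns; case: cid. Qed.

Definition Kb : nat :=
  (\max_(Dz <- Ns) \max_(A <- Fs) `|\det (1%:M - toint A *m Dz)|%N).+1.

Definition Pint (A : 'M[R]_n) := 1%:M - toint A *m Dint.

Lemma PintE A : F A -> imx (Pint A) = 1%:M - A *m D.
Proof.
by move=> FA; rewrite /Pint imxB imx1 imxM DintE -isZm_imx //; exact: FZ.
Qed.

Lemma det_lt A : F A -> (`|\det (Pint A)|%N < Kb)%N.
Proof.
move=> FA; rewrite ltnS.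
have DN : Dint \in Ns by have := D_norm; rewrite NsE.
apply: (leq_trans _ (leq_bigmax_seq _ DN isT)).
exact: (leq_trans _ (leq_bigmax_seq _ (inFs FA) isT)).
Qed.

Definition keyT := ('I_(size Fs) * {ffun 'I_n -> 'I_Kb})%type.

Definition repr (key : keyT) : aff :=
  (cA (nth 0 Fs key.1) + imx (\col_i ((key.2 i : nat)%:Z)), nth 0 Fs key.1).

Lemma rep_exists (x : aff) : G x -> (forall A, F A -> \det (Pint A) != 0) ->
  exists key : keyT, tc (repr key) x.
Proof.
case: x => c A Gx hd.
have FA : F A by exists c.
have AFs : (index A Fs < size Fs)%N by rewrite index_mem; exact: inFs.
have GcA := cA_G FA.
have Zy : isZm (c - cA A).
  by apply/trG; rewrite -(mul_inv_same _ _ (GU Gx)); apply: GM => //; exact: GV.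
set yi := toint (c - cA A).
have ey : imx yi = c - cA A by rewrite -isZm_imx.
set d := \det (Pint A).
have d0 : d != 0 by exact: hd.
set q := map_mx (fun t => (t %/ d)%Z) yi.
set r := map_mx (fun t => (t %% d)%Z) yi.
have eyi : yi = d *: q + r.
  by apply/matrixP => i j; rewrite !mxE mulrC -divz_eq.
have r0 i : 0 <= r i ord0 by rewrite mxE modz_ge0.
have rlt i : (`|r i ord0|%N < Kb)%N.
  apply: (leq_trans _ (det_lt FA)); rewrite ltnS; apply: ltnW.
  by rewrite -ltz_nat !abszE ger0_norm ?r0 // mxE ltz_mod.
exists (Ordinal AFs, [ffun i => Ordinal (rlt i)]).
rewrite /repr /= nth_index; last exact: inFs.
have -> : \col_i ((([ffun i => Ordinal (rlt i)] i : 'I_Kb) : nat)%:Z) = r.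
  by apply/matrixP => i j; rewrite (ord1 j) [LHS]mxE ffunE /= abszE ger0_norm ?r0.
set w : V := - imx (\adj (Pint A) *m q).
have Zw : isZm w by apply: isZmN; exact: imx_isZm.
have := @tc_tr c A w Zw.
have -> : c + (1%:M - A *m D) *m w = cA A + imx r.
  rewrite /w -PintE // mulmxN -imxM mulmxA mul_mx_adj mul_scalar_mx.
  have -> : (imx r : V) = imx yi - imx (d *: q).
    by rewrite -imxB; congr imx; rewrite [in RHS]eyi addrAC subrr add0r.
  by rewrite ey addrA [cA A + _]addrC subrK.
done.
Qed.

Lemma count1 k : (forall A, F A -> \det (Pint A) != 0) -> has_k_classes G phi k ->
  (k <= size Fs * Kb ^ n)%N.
Proof.
move=> hd [s [_ sG sinj sall]].
have : forall i : 'I_k, exists key : keyT, tc (repr key) (nth 1' s i).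
  by move=> i; exact: rep_exists (sG i (ltn_ord i)) hd.
move=> /choice [key hk].
have inj : injective key.
  move=> i j e; apply: ord_inj; apply: sinj; try exact: ltn_ord.
  apply: (tc_trans (g' := repr (key i))); first exact: tc_sym (sG _ (ltn_ord i)) (hk i).
  by rewrite e; exact: hk.
by have := leq_card _ inj; rewrite card_ord card_prod card_ffun !card_ord.
Qed.

Lemma count2 k A0 : F A0 -> \det (Pint A0) = 0 -> ~ has_k_classes G phi k.
Proof.
move=> FA0 hd0 [s [_ sG sinj sall]].
set P0 : 'M[R]_n := 1%:M - A0 *m D.
have eP0 : imx (Pint A0) = P0 by rewrite PintE.
have : \det P0 == 0 by rewrite -eP0 det_imx hd0.
move=> /det0P [v v0 hv].
have [i0 vi0] : exists i0, v 0 i0 != 0.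
  apply: contrapT => hn; move/eqP: v0; apply; apply/matrixP => i j; rewrite (ord1 i) mxE.
  by apply/eqP/negPn/negP => hij; apply: hn; exists j.
set c0 := cA A0.
pose e : V := delta_mx i0 0.
pose x (m : nat) : aff := (m%:R *: e + c0, A0).
have Gx m : G (x m).
  rewrite /x -tr_mull; apply: GM; last exact: cA_G FA0.
  apply/trG => i j; rewrite !mxE; apply: rpredM; first exact: rpred_nat.
  exact: rpred_nat.
set N := (k * size Fs).+1.
have : forall m : 'I_N, exists p : ('I_k * 'I_(size Fs)) * aff,
    [/\ G p.2, nth 0 Fs p.1.2 = p.2.2 &
        x m = aff_mul (aff_mul p.2 (nth 1' s p.1.1)) (aff_inv (phi p.2))].
  move=> m; have [i ik [h Gh eh]] := sall _ (Gx m).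
  have Fh : F h.2 by exists h.1; rewrite -surjective_pairing.
  have hFs : (index h.2 Fs < size Fs)%N by rewrite index_mem; exact: inFs.
  exists ((Ordinal ik, Ordinal hFs), h); split => //=.
  by rewrite nth_index //; exact: inFs.
move=> /choice [p hp].
have inj : injective (fun m => (p m).1).
  move=> m m' e1.
  have [Gh eh xh] := hp m; have [Gh' eh' xh'] := hp m'.
  rewrite e1 in eh xh; rewrite eh' in eh.
  set h := (p m).2 in Gh eh xh; set h' := (p m').2 in Gh' eh' xh' eh.
  set sv := nth 1' s (p m').1.1 in xh xh'.
  have uh := Gaff Gh; have uh' := Gaff Gh'.
  set t := aff_mul h (aff_inv h').
  have Gt : G t by apply: GM => //; exact: GV.
  have t2 : t.2 = 1%:M by rewrite /t /= eh mulmxV //.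
  have et : t = tr t.1 by rewrite /tr -t2 -surjective_pairing.
  have Zt : isZm t.1 by apply/trG; rewrite -et.
  have eh2 : h = aff_mul t h' by rewrite /t mulgVK.
  have upt : is_aff (phi t) by apply: Gaff; exact: phiG.
  have uph' : is_aff (phi h') by apply: Gaff; exact: phiG.
  have : x m = aff_mul (aff_mul t (x m')) (aff_inv (phi t)).
    by rewrite xh xh' eh2 phiM // invM // !mulA.
  have tw := tr_twist (m'%:R *: e + c0) A0 Zt; rewrite -et in tw.
  rewrite /x tw => /(congr1 fst) /= E.
  have := congr1 (fun z => (v *m z) 0 0) E => /=.
  rewrite [in RHS]mulmxDr [in RHS]mulmxA -/P0 hv mul0mx addr0 !mulmxDr -!scalemxAr -!colE !mxE.
  move/addIr/(mulIf vi0)/eqP; rewrite eqr_nat => /eqP em.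
  exact: ord_inj.
have := leq_card _ inj; rewrite card_ord card_prod !card_ord.
by rewrite ltnn.
Qed.

Lemma bound_k k : has_k_classes G phi k -> (k <= size Fs * Kb ^ n)%N.
Proof.
move=> hk; case: (pselect (forall A, F A -> \det (Pint A) != 0)) => [hd|nd].
  exact: count1.
exfalso; apply: nd => A FA; apply/eqP => h0; exact: count2 FA h0 hk.
Qed.

End Phi.
End Main.

Theorem theorem5p6 (R : realType) (n : nat) (G : set (aff R n)) :
  crystallographic_Zn G ->
  finite_set (GLZ_normaliser (holonomy G)) ->
  finite_set (reidemeister_spectrum G).
Proof.
move=> [Hsub _ Htr] HN.
have [M hM] : exists M, forall phi k, is_aut G phi -> has_k_classes G phi k -> (k <= M)%N.
  by eexists => phi k Hphi; exact: (bound_k Hsub Htr HN Hphi).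
apply: (sub_finite_set (B := [set None] `|` (Some @` `I_M.+1))).
  move=> [k|] [phi [Hphi hr]]; last by left.
  by right; exists k => //=; rewrite ltnS; exact: hM hr.
by rewrite finite_setU; split; [exact: finite_set1 | apply: finite_image; exact: finite_II].
Qed.
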